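(* Let $a,b,c\in\mathbb{R}$ and $f(x)=x^3+ax^2+bx+c$. Then $f(x)\ge0$ for all $x\ge0$ if and only if one of the following holds: (1) $a\ge0$, $b\ge0$ and $c\ge0$; (2) $c=0$ and $a^2-4b\le0$; (3) $c>0$ and $a^2b^2-4b^3-4a^3c+18abc-27c^2\le0$. *)

(* Defs.v *)
From Stdlib Require Import Reals.
Open Scope R_scope.

Definition cubic (a b c x : R) : R := x ^ 3 + a * x ^ 2 + b * x + c.

(* Main.v *)
Require Import Defs.
From Stdlib Require Import Reals Lra Psatz.
Open Scope R_scope.
Lemma keyF (m q y0 y : R): 0<m -> y0 <= y -> 0 < y0^3 - 3*(m*m)*y0 + q ->
  4*(m^3)^2 <= q^2 -> 0 <= y^3 - 3*(m*m)*y + q.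
Proof.
  intros hm hy hc hq.
  assert (E1 : y^3 - 3*(m*m)*y + q - (y0^3 - 3*(m*m)*y0 + q) = (y-y0)*(y*y+y*y0+y0*y0-3*(m*m))) by ring.
  assert (E2 : y^3 - 3*(m*m)*y + q = (y-m)*(y-m)*(y+2*m) + (q - 2*m^3)) by ring.
  assert (E3 : y^3 - 3*(m*m)*y + q = (y+m)*(y+m)*(y-2*m) + (q + 2*m^3)) by ring.
  assert (E4 : y0^3 - 3*(m*m)*y0 + q = (y0+m)*(y0+m)*(y0-2*m) + (q + 2*m^3)) by ring.
  assert (hm3 : 0 < m^3) by (apply pow_lt; lra).
  assert (Hq : q >= 2*m^3 \/ q <= -2*m^3).
  { destruct (Rle_dec q (-2*m^3)); [right; lra|].
    destruct (Rle_dec (2*m^3) q); [left; lra|]. exfalso. nra. }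
  destruct Hq as [Hq|Hq].
  - destruct (Rle_dec (-2*m) y).
    + rewrite E2. assert (0 <= (y-m)*(y-m)) by (pose proof (Rle_0_sqr (y-m)); unfold Rsqr in *; lra). assert (0 <= (y-m)*(y-m)*(y+2*m)) by (apply Rmult_le_pos; lra). lra.
    + assert (0 <= (y-y0)*(y*y+y*y0+y0*y0-3*(m*m))).
      { apply Rmult_le_pos; nra. }
      lra.
  - assert (y0 > 2*m).
    { destruct (Rle_dec y0 (2*m)); [|lra]. exfalso.
      assert (0 <= (y0+m)*(y0+m)) by (pose proof (Rle_0_sqr (y0+m)); unfold Rsqr in *; lra).
      assert (0 <= (y0+m)*(y0+m)*(2*m-y0)) by (apply Rmult_le_pos; lra).
      assert ((y0+m)*(y0+m)*(y0-2*m) = -((y0+m)*(y0+m)*(2*m-y0))) by ring. lra. }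
    assert (0 <= (y-y0)*(y*y+y*y0+y0*y0-3*(m*m))).
    { apply Rmult_le_pos; nra. }
    lra.
Qed.

Lemma shift (a b c x : R) : cubic a b c x =
  (x+a/3)^3 - 3*((a^2-3*b)/9)*(x+a/3) + (2*a^3/27 - a*b/3 + c).
Proof. unfold cubic. field. Qed.

Lemma discr (a b c : R) :
  a ^ 2 * b ^ 2 - 4 * b ^ 3 - 4 * a ^ 3 * c + 18 * a * b * c - 27 * c ^ 2 =
  108*((a^2-3*b)/9)^3 - 27*(2*a^3/27 - a*b/3 + c)^2.
Proof. field. Qed.

Theorem lemma4p9 (a b c : R) :
  (forall x : R, 0 <= x -> 0 <= cubic a b c x) <->
  ((0 <= a /\ 0 <= b /\ 0 <= c) \/
   (c = 0 /\ a ^ 2 - 4 * b <= 0) \/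
   (0 < c /\ a ^ 2 * b ^ 2 - 4 * b ^ 3 - 4 * a ^ 3 * c + 18 * a * b * c - 27 * c ^ 2 <= 0)).
Proof.
  rewrite discr.
  split.
  - intro H.
    assert (Hc : 0 <= c) by (generalize (H 0 (Rle_refl 0)); unfold cubic; lra).
    destruct (Rle_lt_or_eq_dec _ _ Hc) as [Hc'|Hc'].
    + set (q := 2*a^3/27 - a*b/3 + c).
      set (D := a^2 - 3*b).
      destruct (Rle_dec D 0) as [HD|HD].
      * right; right; split; [exact Hc'|].
        assert (0 <= D*D) by nra.
        assert (D^3 <= 0) by (simpl; nra).
        assert (0 <= q^2) by nra.
        replace ((a^2-3*b)/9) with (D/9) by reflexivity.
        replace ((D/9)^3) with (D^3/729) by field. lra.
      * set (m := sqrt (D/9)).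
        assert (hm : m*m = D/9) by (apply sqrt_sqrt; lra).
        assert (hm0 : 0 < m) by (apply sqrt_lt_R0; lra).
        destruct (Rle_dec 0 (-a/3+m)) as [Hx|Hx].
        -- right; right; split; [exact Hc'|].
           generalize (H _ Hx). rewrite shift. fold D. fold q.
           replace (-a/3+m+a/3) with m by field. rewrite <- hm.
           intro Hq.
           assert (0 <= m^3) by (apply pow_le; lra).
           assert (q >= 2*m^3) by nra.
           replace ((a^2-3*b)/9) with (m*m) by (rewrite hm; reflexivity).
           assert (q^2 >= 4*(m^3)^2) by nra.
           replace ((m*m)^3) with ((m^3)^2) by ring. lra.
        -- left. assert (ha : a > 3*m) by lra.
           assert (hb : b = (a*a - 9*(m*m))/3) by (rewrite hm; unfold D; field).
           split; [lra|split; [|lra]].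
           rewrite hb. nra.
    + subst c. destruct (Rle_dec 0 a) as [Ha|Ha].
      * destruct (Rle_dec 0 b) as [Hb|Hb]; [left; lra|].
        exfalso.
        set (x := -b/(2*(a+1)-b)).
        assert (hden : 0 < 2*(a+1)-b) by lra.
        assert (hx0 : 0 < x) by (unfold x; apply Rdiv_lt_0_compat; lra).
        assert (hx1 : x <= 1) by (unfold x; apply Rmult_le_reg_r with (2*(a+1)-b); [lra|]; field_simplify; lra).
        assert (hx2 : x*(a+1) <= -b/2).
        { unfold x. apply Rmult_le_reg_r with (2*(a+1)-b); [lra|]. field_simplify; [|lra]. nra. }
        generalize (H x (Rlt_le _ _ hx0)). unfold cubic.
        assert (x*x <= x) by nra.
        assert (x*x + a*x + b < 0) by nra.
        intro Hf. assert (x*(x*x+a*x+b) < 0) by nra. simpl in Hf. nra.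
      * right; left; split; [reflexivity|].
        assert (hx : 0 <= -a/2) by lra.
        generalize (H _ hx). unfold cubic. intro Hf.
        assert (Hf' : 0 <= (-a/2)*(b - a^2/4)) by (replace ((-a/2)*(b-a^2/4)) with ((- a / 2) ^ 3 + a * (- a / 2) ^ 2 + b * (- a / 2) + 0) by field; exact Hf).
        assert (0 <= b - a^2/4).
        { destruct (Rle_dec 0 (b - a^2/4)); [assumption|]. exfalso.
          assert (0 < (-a/2)*(-(b-a^2/4))) by (apply Rmult_lt_0_compat; lra). lra. }
        lra.
  - intros [ (ha&hb&hc) | [ (hc&hd) | (hc&hd) ] ] x hx; unfold cubic.
    + assert (0 <= x*x) by nra. assert (0 <= x*x*x) by nra.
      assert (0 <= a*(x*x)) by nra. assert (0 <= b*x) by nra. simpl. nra.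
    + subst c. assert (0 <= x*((x+a/2)*(x+a/2))) by (apply Rmult_le_pos; [lra|pose proof (Rle_0_sqr (x+a/2)); unfold Rsqr in *; lra]).
      assert (0 <= x*(4*b - a^2)) by (apply Rmult_le_pos; lra).
      assert (E : x ^ 3 + a * x ^ 2 + b * x + 0 = x*((x+a/2)*(x+a/2)) + x*(4*b - a^2)/4) by field.
      rewrite E. lra.
    + fold (cubic a b c x). rewrite shift.
      set (q := 2*a^3/27 - a*b/3 + c) in *.
      set (D := a^2 - 3*b) in *.
      destruct (Rle_dec D 0) as [HD|HD].
      * unfold q, D in *. rewrite <- shift. unfold cubic.
        assert (0 <= x*((x+a/2)*(x+a/2))) by (apply Rmult_le_pos; [lra|pose proof (Rle_0_sqr (x+a/2)); unfold Rsqr in *; lra]).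
        assert (0 <= a^2) by (apply pow2_ge_0).
        assert (0 <= x*(b - a^2/4)) by (apply Rmult_le_pos; unfold D in HD; lra).
        assert (E : x ^ 3 + a * x ^ 2 + b * x + c = x*((x+a/2)*(x+a/2)) + x*(b - a^2/4) + c) by field.
        rewrite E. lra.
      * set (m := sqrt (D/9)).
        assert (hm : m*m = D/9) by (apply sqrt_sqrt; lra).
        assert (hm0 : 0 < m) by (apply sqrt_lt_R0; lra).
        rewrite <- hm. apply keyF with (a/3); [exact hm0|lra| |].
        -- generalize (shift a b c 0). fold D q. unfold cubic. rewrite <- hm. intro E.
           replace (0+a/3) with (a/3) in E by field. simpl in E. simpl. lra.
        -- rewrite <- hm in hd. replace ((m*m)^3) with ((m^3)^2) in hd by ring. lra.
Qed.
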